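(* Let $G=(V,E,w)$ be a weighted undirected $n$-vertex graph with distinct positive edge weights that contains a Hamiltonian path (no triangle inequality or completeness is assumed), and let $r:V\to\mathbb{R}^+$ be a range assignment. Let $F=(V,E_F)$ be the minimum spanning forest of $S=SDG(G,r)$ and let $H$ be a minimum-weight Hamiltonian path of $G$. Then there is an edge set $\tilde E\subseteq E_F$ with $w(\tilde E)\le w(H)$ such that $F\setminus\tilde E$ contains at least $\frac15\cdot n$ isolated vertices.
   Context: For a weighted graph $G=(V,E,w)$ and $r:V\to\mathbb{R}^+$, the symmetric disk graph $SDG(G,r)$ is the spanning subgraph of $G$ containing an edge $e=(u,v)\in E$ if and only if $r(u)\ge w(e)$ and $r(v)\ge w(e)$. The minimum spanning forest of a weighted graph is a spanning forest with the same connected components and minimum total weight (unique for distinct weights). The weight of an edge set is the sum of its edge weights. *)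

(* Defs.v *)
From HB Require Import structures.
From mathcomp Require Import all_boot all_order all_algebra.
Set Implicit Arguments. Unset Strict Implicit. Unset Printing Implicit Defensive.
Import Order.TTheory GRing.Theory Num.Theory.
Local Open Scope ring_scope.

(* A weighted undirected simple graph on a finite vertex type V is an edge set
   E : {set {set V}} (each edge a 2-element vertex set) with a weight w on edges. *)
Definition is_graph (V : finType) (E : {set {set V}}) : Prop :=
  forall f, f \in E -> #|f| = 2%N.

Definition adj (V : finType) (A : {set {set V}}) : rel V :=
  fun x y => (x != y) && ([set x; y] \in A).

Definition wset (R : realFieldType) (V : finType) (w : {set V} -> R)
  (A : {set {set V}}) : R := \sum_(f in A) w f.

Definition distinct_pos_weights (R : realFieldType) (V : finType)
  (E : {set {set V}}) (w : {set V} -> R) : Prop :=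
  (forall f, f \in E -> 0 < w f) /\
  (forall f g, f \in E -> g \in E -> w f = w g -> f = g).

Definition SDG (R : realFieldType) (V : finType) (E : {set {set V}})
  (w : {set V} -> R) (r : V -> R) : {set {set V}} :=
  [set f in E | [forall u in f, w f <= r u]].

Definition has_cycle (V : finType) (A : {set {set V}}) : Prop :=
  exists c : seq V, [/\ (3 <= size c)%N, uniq c & cycle (adj A) c].

Definition forest (V : finType) (A : {set {set V}}) : Prop := ~ has_cycle A.

Definition spanning_forest_of (V : finType) (S F : {set {set V}}) : Prop :=
  [/\ F \subset S, forest F & forall x y, connect (adj F) x y = connect (adj S) x y].

Definition min_spanning_forest (R : realFieldType) (V : finType)
  (w : {set V} -> R) (S F : {set {set V}}) : Prop :=
  spanning_forest_of S F /\
  forall F', spanning_forest_of S F' -> wset w F <= wset w F'.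

Definition ham_path (V : finType) (E : {set {set V}}) (p : seq V) : Prop :=
  [/\ uniq p, forall v, v \in p &
      (if p is x :: q then path (adj E) x q else true)].

Definition path_weight (R : realFieldType) (V : finType) (w : {set V} -> R)
  (p : seq V) : R :=
  \sum_(xy <- zip p (behead p)) w [set xy.1; xy.2].

Definition min_ham_path (R : realFieldType) (V : finType) (E : {set {set V}})
  (w : {set V} -> R) (p : seq V) : Prop :=
  ham_path E p /\ forall q, ham_path E q -> path_weight w p <= path_weight w q.

Definition isolated (V : finType) (A : {set {set V}}) : {set V} :=
  [set v | [forall f in A, v \notin f]].

(* Main.v *)
Require Import Defs.
From HB Require Import structures.
From mathcomp Require Import all_boot all_order all_algebra.
Import Order.TTheory GRing.Theory Num.Theory.
Set Implicit Arguments. Unset Strict Implicit. Unset Printing Implicit Defensive.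

Section Graph.
Variable V : finType.
Implicit Types A B : {set {set V}}.

Lemma set2_eq (x y p q : V) : [set x; y] = [set p; q] ->
  (x = p /\ y = q) \/ (x = q /\ y = p).
Proof.
move=> E.
have hx : x \in [set p; q] by rewrite -E !inE eqxx.
have hy : y \in [set p; q] by rewrite -E !inE eqxx orbT.
have hp : p \in [set x; y] by rewrite E !inE eqxx.
have hq : q \in [set x; y] by rewrite E !inE eqxx orbT.
move: hx hy hp hq; rewrite !inE => /orP[]/eqP hx /orP[]/eqP hy /orP[]/eqP hp /orP[]/eqP hq;
  subst; auto.
Qed.

Lemma set2C' (x y : V) : [set x; y] = [set y; x].
Proof. by apply/setP=> z; rewrite !inE orbC. Qed.

Lemma adj_sym A : symmetric (adj A).
Proof. by move=> x y; rewrite /adj /= eq_sym set2C'. Qed.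

Lemma conn_sym A x y : connect (adj A) x y = connect (adj A) y x.
Proof. exact: (sym_connect_sym (@adj_sym A)). Qed.

Lemma conn_trans A x y z : connect (adj A) x y -> connect (adj A) y z -> connect (adj A) x z.
Proof. exact: connect_trans. Qed.

Lemma adj_conn A x y : adj A x y -> connect (adj A) x y.
Proof. exact: connect1. Qed.

Lemma conn_edges A B x y : (forall u v, adj A u v -> connect (adj B) u v) ->
  connect (adj A) x y -> connect (adj B) x y.
Proof.
move=> H /connectP[p pth ->]; elim: p x pth => [|z p IH] x /=; first by rewrite connect0.
case/andP=> a pth; apply: conn_trans (H _ _ a) (IH _ pth).
Qed.

Lemma adj_mono A B x y : A \subset B -> adj A x y -> adj B x y.
Proof. by move=> sAB /andP[nxy /(subsetP sAB) e]; rewrite /adj /= nxy e. Qed.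

Lemma conn_mono A B x y : A \subset B -> connect (adj A) x y -> connect (adj B) x y.
Proof. by move=> sAB; apply: conn_edges => u v /(adj_mono sAB) /adj_conn. Qed.

Lemma adjU1 A g u v : adj (g |: A) u v -> adj A u v \/ [set u; v] = g.
Proof. by case/andP=> nuv; rewrite !inE => /orP[/eqP|]; [right|left; rewrite /adj nuv]. Qed.

Lemma conn_add A p q x y : connect (adj ([set p; q] |: A)) x y ->
  [\/ connect (adj A) x y,
      connect (adj A) x p /\ connect (adj A) q y |
      connect (adj A) x q /\ connect (adj A) p y].
Proof.
move/connectP=> [s pth ->]; elim: s x pth => [|z s IH] x /=; first by move=> _; apply: Or31; rewrite connect0.
case/andP=> a /IH; set l := last z s => IHz.
case: (adjU1 a) => [axz | /set2_eq [[ex ez]|[ex ez]]]; subst.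
- have cxz := adj_conn axz.
  case: IHz => [c|[c1 c2]|[c1 c2]]; [apply: Or31|apply: Or32|apply: Or33];
    try split; by [apply: conn_trans cxz _|].
- case: IHz => [c|[c1 c2]|[c1 c2]].
  + by apply: Or32; rewrite connect0.
  + by apply: Or31; apply: conn_trans c2; rewrite conn_sym.
  + by apply: Or31.
- case: IHz => [c|[c1 c2]|[c1 c2]].
  + by apply: Or33; rewrite connect0.
  + by apply: Or31.
  + by apply: Or31; apply: conn_trans c2; rewrite conn_sym.
Qed.

Lemma path_avoid A (g : {set V}) z x s : z \notin x :: s -> z \in g -> path (adj A) x s ->
  path (adj (A :\ g)) x s.
Proof.
elim: s x => [|y s IH] x //= nz zg /andP[/andP[nxy exy] pth].
move: nz; rewrite !inE negb_or => /andP[zx nz]; apply/andP; split; last first.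
  by apply: IH => //; rewrite inE.
rewrite /adj /= nxy !inE exy andbT; apply/eqP=> E; move: zg; rewrite -E !inE.
by rewrite (negbTE zx) /=; move: nz; rewrite negb_or => /andP[/negbTE ->].
Qed.

Lemma forest_sep A p q : forest A -> p != q -> [set p; q] \in A ->
  ~~ connect (adj (A :\ [set p; q])) p q.
Proof.
move=> fA npq gA; apply/negP=> /connectP[s0 pth0 e0].
case: (shortenP pth0) e0 => s pth u _ e.
apply: fA; exists (p :: s); split => //.
- case: s pth u e => [|z [|z' s]] //= pth u e.
  + by move: npq; rewrite e eqxx.
  + move: pth; rewrite -e andbT /adj !inE eqxx /= andbF //.
- rewrite /cycle rcons_path (sub_path _ pth) /=.
    by rewrite -e /adj eq_sym npq set2C' gA.
  by move=> a b; apply: adj_mono; apply: subsetDl.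
Qed.

Lemma last_in (y : V) s : s != [::] -> last y s \in s.
Proof. by case: s => // a s _; rewrite /= mem_last. Qed.

Lemma sep_forest A : (forall x y, x != y -> [set x; y] \in A ->
  ~~ connect (adj (A :\ [set x; y])) x y) -> forest A.
Proof.
move=> H [c [sz u cy]].
case: c sz u cy => [|x [|y s]] // sz u cy.
have sn : s != [::] by case: s sz {u cy}.
move: cy; rewrite /cycle /= => /andP[/andP[nxy exy]]; rewrite rcons_path => /andP[pth al].
apply: (negP (H x y nxy exy)); rewrite conn_sym; apply/connectP.
exists (rcons s x); last by rewrite last_rcons.
rewrite rcons_path; apply/andP; split.
  apply: (path_avoid (z:=x)) => //; first by move: u => /andP[].
  by rewrite !inE eqxx.
have ls : last y s \in s := last_in y sn.
move: u; rewrite /= !inE negb_or => /andP[/andP[_ nxs] /andP[nys _]].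
move: al => /andP[nlx el]; rewrite /adj nlx !inE el andbT.
apply/eqP=> /set2_eq [[a b]|[a b]].
- by move: nxs; rewrite -a ls.
- by move: nys; rewrite -a ls.
Qed.

End Graph.

Section Comps.
Variable V : finType.
Implicit Types A B O : {set {set V}}.

Lemma forest_sub A B : B \subset A -> forest A -> forest B.
Proof.
move=> sBA fA [c [sz u cy]]; apply: fA; exists c; split => //.
by apply: sub_cycle cy => x y; apply: adj_mono.
Qed.

Lemma coarser_card (f g : V -> {set V}) (D : {set V}) :
  {in D &, forall x y, f x = f y -> g x = g y} -> #|g @: D| <= #|f @: D|.
Proof.
move=> H.
pose phi (C : {set V}) := \bigcup_(x in D | f x == C) g x.
have E : g @: D = phi @: (f @: D).
  rewrite -imset_comp; apply: eq_in_imset => x xD /=.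
  apply/setP=> z; apply/idP/bigcupP => [zg|[y /andP[yD /eqP fy] zy]].
    by exists x; rewrite ?xD ?eqxx.
  by rewrite -(H _ _ yD xD fy).
by rewrite E leq_imset_card.
Qed.

Definition cls A x := [set y | connect (adj A) x y].
Definition comps A := #|[set cls A x | x in [set: V]]|.

Lemma cls_eq A x y : (cls A x == cls A y) = connect (adj A) x y.
Proof.
apply/eqP/idP => [E|c].
  have : y \in cls A y by rewrite inE connect0.
  by rewrite -E inE.
apply/setP=> z; rewrite !inE; apply/idP/idP => h.
  by apply: conn_trans h; rewrite conn_sym.
exact: conn_trans c h.
Qed.

Lemma comps_le A : comps A <= #|V|.
Proof. by rewrite /comps (leq_trans (leq_imset_card _ _)) // cardsT. Qed.

Lemma comps_mono A B : (forall x y, connect (adj B) x y -> connect (adj A) x y) ->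
  comps A <= comps B.
Proof.
move=> H; apply: coarser_card => x y _ _ /eqP; rewrite cls_eq => /H.
by rewrite -cls_eq => /eqP.
Qed.

Lemma comps_add_le A p q : comps A <= (comps ([set p; q] |: A)).+1.
Proof.
set A' := _ |: A.
pose D := [set x | ~~ connect (adj A) q x].
have s1 : [set cls A x | x in [set: V]] \subset cls A q |: (cls A @: D).
  apply/subsetP=> C /imsetP[x _ ->]; rewrite !inE.
  case: (boolP (connect (adj A) q x)) => h.
    by apply/orP; left; rewrite eq_sym cls_eq.
  by apply/orP; right; apply/imsetP; exists x; rewrite // inE.
rewrite /comps (leq_trans (subset_leq_card s1)) // cardsU1.
rewrite (leq_trans (leq_add (leq_b1 _) (leqnn _))) // add1n ltnS (leq_trans (n := #|cls A' @: D|)) //.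
  apply: coarser_card => x y; rewrite !inE => xD yD /eqP; rewrite cls_eq => /conn_add.
  case=> [c|[c1 c2]|[c1 c2]]; first by apply/eqP; rewrite cls_eq.
  - by move: yD; rewrite c2.
  - by move: xD; rewrite conn_sym c1.
by apply: subset_leq_card; apply: imsetS; apply: subsetT.
Qed.

Lemma comps_add_sep A p q : ~~ connect (adj A) p q ->
  (comps ([set p; q] |: A)).+1 <= comps A.
Proof.
move=> npq; set A' := _ |: A.
have pq : p != q by apply: contraNneq npq => ->; rewrite connect0.
pose D := [set x | ~~ connect (adj A) q x].
have pD : p \in D by rewrite inE conn_sym.
have s1 : [set cls A' x | x in [set: V]] \subset cls A' @: D.
  apply/subsetP=> C /imsetP[x _ ->].
  case: (boolP (connect (adj A) q x)) => h; last by apply/imsetP; exists x; rewrite ?inE.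
  apply/imsetP; exists p => //; apply/eqP; rewrite cls_eq.
  apply: (@conn_trans _ _ _ q).
    by rewrite conn_sym (conn_mono (subsetUr _ _) h).
  by apply: adj_conn; rewrite /adj /= eq_sym pq !inE set2C' eqxx.
have s2 : #|cls A' @: D| <= #|cls A @: D|.
  apply: coarser_card => x y _ _ /eqP; rewrite cls_eq => c; apply/eqP; rewrite cls_eq.
  exact: conn_mono (subsetUr _ _) c.
have s3 : cls A @: D \subset [set cls A x | x in [set: V]] :\ cls A q.
  apply/subsetP=> C /imsetP[x xD ->]; rewrite !inE; apply/andP; split.
    by apply/negP => /eqP E; move: xD; rewrite inE -cls_eq E eqxx.
  by apply/imsetP; exists x.
rewrite /comps [X in _ < X](cardsD1 (cls A q)) imset_f ?inE // add1n ltnS.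
by rewrite (leq_trans (subset_leq_card s1)) // (leq_trans s2) // subset_leq_card.
Qed.

Lemma comps_forest A : is_graph A -> forest A -> #|A| + comps A <= #|V|.
Proof.
move H : #|A| => m; elim: m A H => [|m IH] A cA gA fA; first by rewrite add0n comps_le.
have [g gin] : exists g, g \in A by apply/set0Pn; rewrite -card_gt0 cA.
have /cards2P [p [q [npq eg]]] : #|g| == 2 by rewrite gA.
subst g.
have fA' : forest (A :\ [set p; q]) by apply: forest_sub fA; apply: subsetDl.
have gA' : is_graph (A :\ [set p; q]) by move=> f; rewrite inE => /andP[_ /gA].
have cA' : #|A :\ [set p; q]| = m by move: cA; rewrite (cardsD1 [set p; q]) gin add1n => [[]].
have := IH _ cA' gA' fA'.
have := comps_add_sep (forest_sep fA npq gin).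
by rewrite setD1K // => h1 h2; rewrite addSn -addnS (leq_trans _ h2) // leq_add2l.
Qed.

Lemma comps0 : comps set0 = #|V|.
Proof.
have E : forall x, cls set0 x = [set x].
  move=> x; apply/setP=> y; rewrite !inE; apply/idP/idP; last by move/eqP->; rewrite connect0.
  by case/connectP=> [[|z s]] /=; [move=> _ ->|rewrite /adj /= inE andbF].
rewrite /comps (eq_imset (g := set1)) //.
by rewrite card_imset ?cardsT //; apply: set1_inj.
Qed.

Lemma comps_union O A : (forall g, g \in O -> exists p q, g = [set p; q]) ->
  comps A <= comps (A :|: O) + #|O|.
Proof.
move H : #|O| => m; elim: m O H => [|m IH] O cO hO.
  by move: cO => /eqP; rewrite cards_eq0 => /eqP ->; rewrite setU0 addn0.
have [g gin] : exists g, g \in O by apply/set0Pn; rewrite -card_gt0 cO.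
have cO' : #|O :\ g| = m by move: cO; rewrite (cardsD1 g) gin add1n => [[]].
have h1 := IH (O :\ g) cO' (fun g' h => hO g' (subsetP (subsetDl _ _) _ h)).
have [p [q eg]] := hO g gin.
have E : A :|: O = [set p; q] |: (A :|: O :\ g).
  by rewrite -eg setUCA setD1K.
rewrite E (leq_trans h1) // addnS -addSn leq_add2r.
exact: comps_add_le.
Qed.

Lemma comps_lb A : (forall g, g \in A -> exists p q, g = [set p; q]) ->
  #|V| <= #|A| + comps A.
Proof. by move=> h; rewrite -comps0 addnC (leq_trans (comps_union _ h)) // set0U. Qed.

End Comps.

Section MSF.
Local Open Scope ring_scope.
Variables (R : realFieldType) (V : finType) (w : {set V} -> R) (S F : {set {set V}}).
Hypothesis gS : is_graph S.
Hypothesis msf : min_spanning_forest w S F.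

Let sFS : F \subset S. Proof. by case: msf => [[]]. Qed.
Let fF : forest F. Proof. by case: msf => [[]]. Qed.
Let cF x y : connect (adj F) x y = connect (adj S) x y. Proof. by case: msf => [[]]. Qed.
Let minF F' : spanning_forest_of S F' -> wset w F <= wset w F'.
Proof. by case: msf => _; apply. Qed.

Lemma pair_of (f : {set V}) : f \in S -> exists p q, p != q /\ f = [set p; q].
Proof. by move=> /gS /eqP /cards2P. Qed.

Lemma exchange a b p q : a != b -> [set a; b] \in S -> [set a; b] \notin F ->
  p != q -> [set p; q] \in F -> ~~ connect (adj (F :\ [set p; q])) a b ->
  w [set p; q] <= w [set a; b].
Proof.
set e := [set a; b]; set f := [set p; q] => nab eS eF npq fin sep.
set F' := e |: (F :\ f).
have eF' : e \notin F :\ f by rewrite inE negb_and eF orbT.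
have sf : spanning_forest_of S F'.
  split.
  - apply/subsetP=> g; rewrite in_setU1 => /orP[/eqP->//|]; rewrite inE => /andP[_ gF].
    exact: (subsetP sFS).
  - apply: sep_forest => x y nxy; rewrite in_setU1 => /orP[/eqP E|gin].
      rewrite E setU1K //; case/set2_eq: E => [[-> ->]|[-> ->]] //.
      by rewrite conn_sym.
    have ge : [set x; y] != e by apply: contraNneq eF' => <-.
    have gF : [set x; y] \in F by move: gin; rewrite inE => /andP[].
    have E : F' :\ [set x; y] = [set a; b] |: (F :\ f :\ [set x; y]).
      apply/setP=> z; rewrite !inE; case: (boolP (z == e)) => [/eqP->|ze] /=; first by rewrite eq_sym ge.
      by [].

    rewrite E; apply/negP=> /conn_add [c|[c1 c2]|[c1 c2]].
    + have := forest_sep fF nxy gF; rewrite (conn_mono _ c) //.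
      by apply: setSD; apply: subsetDl.
    + apply: (negP sep); have sub : F :\ f :\ [set x; y] \subset F :\ f by apply: subsetDl.
      apply: (@conn_trans _ _ _ x); first by rewrite conn_sym (conn_mono sub c1).
      apply: (@conn_trans _ _ _ y); first by apply: adj_conn; rewrite /adj /= nxy gin.
      by rewrite conn_sym (conn_mono sub c2).
    + apply: (negP sep); have sub : F :\ f :\ [set x; y] \subset F :\ f by apply: subsetDl.
      apply: (@conn_trans _ _ _ y); first by rewrite (conn_mono sub c2).
      apply: (@conn_trans _ _ _ x); last by rewrite (conn_mono sub c1).
      by apply: adj_conn; rewrite /adj /= eq_sym nxy set2C' gin.
  - move=> x y; apply/idP/idP.
      by apply: conn_mono; apply/subsetP=> g; rewrite in_setU1 => /orP[/eqP->//|];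
         rewrite inE => /andP[_ /(subsetP sFS)].
    rewrite -cF; apply: conn_edges => u v auv.
    case: (boolP ([set u; v] == f)) => [/eqP E|ne]; last first.
      apply: adj_conn; move: auv => /andP[nuv uvF]; rewrite /adj /= nuv !inE uvF ne.
      by rewrite andbT orbT.
    have cab : connect (adj F) a b by rewrite cF; apply: adj_conn; rewrite /adj /= nab.
    have sub : F :\ f \subset F' by apply: subsetUr.
    have ae : adj F' a b by rewrite /adj /= nab !inE eqxx.
    have pq : connect (adj F') p q.
      move: cab; rewrite -{1}(setD1K fin) => /conn_add [c|[c1 c2]|[c1 c2]].
      + by move: sep; rewrite c.
      + apply: (@conn_trans _ _ _ a); first by rewrite conn_sym (conn_mono sub c1).
        apply: (@conn_trans _ _ _ b); [exact: adj_conn ae | by rewrite conn_sym (conn_mono sub c2)].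
      + apply: (@conn_trans _ _ _ b); first by rewrite (conn_mono sub c2).
        apply: (@conn_trans _ _ _ a); last by rewrite (conn_mono sub c1).
        by rewrite conn_sym adj_conn.
    by case/set2_eq: E => [[-> ->]|[-> ->]] //; rewrite conn_sym.
have := minF sf; rewrite /wset (bigD1 f fin) /= big_setU1 //=.
have -> : \sum_(i in F | i != f) w i = \sum_(i in F :\ f) w i.
  by apply: eq_bigl => i; rewrite !inE andbC.
by rewrite lerD2r.
Qed.

Lemma cut_light t a b : a != b -> [set a; b] \in S -> w [set a; b] < t ->
  connect (adj [set f in F | w f < t]) a b.
Proof.
move=> nab eS wt.
have cab : connect (adj F) a b by rewrite cF; apply: adj_conn; rewrite /adj /= nab.
case: (boolP ([set a; b] \in F)) => eF.
  by apply: adj_conn; rewrite /adj /= nab inE eF wt.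
have heavy : forall f, f \in F -> t <= w f -> connect (adj (F :\ f)) a b.
  move=> f fin tf; have [p [q [npq E]]] := pair_of (subsetP sFS _ fin); subst f.
  apply/negPn/negP => sep; have := exchange nab eS eF npq fin sep.
  by rewrite leNgt (lt_le_trans wt tf).
have claim : forall m (K : {set {set V}}), #|K| = m -> K \subset [set f in F | t <= w f] ->
    connect (adj (F :\: K)) a b.
  elim=> [|m IH] K cK sK.
    by move: cK => /eqP; rewrite cards_eq0 => /eqP ->; rewrite setD0.
  have [g gin] : exists g, g \in K by apply/set0Pn; rewrite -card_gt0 cK.
  have cK' : #|K :\ g| = m by move: cK; rewrite (cardsD1 g) gin add1n => [[]].
  have := IH _ cK' (subset_trans (subsetDl _ _) sK).
  have := subsetP sK _ gin; rewrite inE => /andP[gF tg].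
  have [p [q [npq E]]] := pair_of (subsetP sFS _ gF); subst g.
  have -> : F :\: (K :\ [set p; q]) = [set p; q] |: (F :\: K).
    apply/setP=> z; rewrite !inE; case: (boolP (z == [set p; q])) => [/eqP->|] //=.
  move/conn_add => [//|[c1 c2]|[c1 c2]]; exfalso.
  - have sub : F :\: K \subset F :\ [set p; q].
      by apply/subsetP=> z; rewrite !inE => /andP[zK ->]; rewrite andbT;
         apply: contraNneq zK => ->.
    have := forest_sep fF npq gF; apply/negP; apply/negPn.
    apply: (@conn_trans _ _ _ a); first by rewrite conn_sym (conn_mono sub c1).
    apply: (@conn_trans _ _ _ b); first exact: heavy.
    by rewrite conn_sym (conn_mono sub c2).
  - have sub : F :\: K \subset F :\ [set p; q].
      by apply/subsetP=> z; rewrite !inE => /andP[zK ->]; rewrite andbT;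
         apply: contraNneq zK => ->.
    have := forest_sep fF npq gF; apply/negP; apply/negPn.
    apply: (@conn_trans _ _ _ b); first by rewrite (conn_mono sub c2).
    apply: (@conn_trans _ _ _ a); first by rewrite conn_sym; exact: heavy.
    by rewrite (conn_mono sub c1).
have := claim _ _ (erefl _) (subxx [set f in F | t <= w f]).
congr (connect (adj _) a b); apply/setP=> z; rewrite !inE.
by case: (z \in F) => /=; rewrite ?andbF // ltNge andbT.
Qed.

End MSF.

Section LC.
Local Open Scope ring_scope.
Variables (R : realFieldType) (T : finType) (a : T -> R).

Lemma seq_max (b : seq R) : b != [::] ->
  exists2 y0, y0 \in b & forall y, y \in b -> y <= y0.
Proof.
elim: b => [|y b IH] // _; case: (eqVneq b [::]) => [->|bn].
  by exists y; rewrite ?inE // => z; rewrite inE => /eqP->.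
have [y1 y1b H] := IH bn.
case: (lerP y y1) => h.
  exists y1; first by rewrite inE y1b orbT.
  by move=> z; rewrite inE => /orP[/eqP->|/H].
exists y; first by rewrite inE eqxx.
move=> z; rewrite inE => /orP[/eqP->//|/H zy1]; exact: le_trans zy1 (ltW h).
Qed.

Lemma set_argmax (A : {set T}) : A != set0 ->
  exists2 m, m \in A & forall x, x \in A -> a x <= a m.
Proof.
move=> An.
have : [seq a x | x <- enum A] != [::].
  case/set0Pn: An => x xA; apply/eqP => E.
  by have := map_f a (etrans (mem_enum A x) xA); rewrite E.
case/seq_max => y0 /mapP[m mA ->] H.
exists m; first by rewrite -mem_enum.
by move=> x xA; apply: H; apply: map_f; rewrite mem_enum.
Qed.

Definition ct (A : {set T}) (t : R) := #|[set x in A | t <= a x]|.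
Definition cnt (t : R) (b : seq R) := count (fun y => t <= y) b.

Lemma ct_D1 (A : {set T}) m t : m \in A ->
  ct A t = addn (t <= a m)%R (ct (A :\ m) t).
Proof.
move=> mA; rewrite /ct (cardsD1 m); congr (_ + _)%N.
  by rewrite inE mA.
by apply: eq_card => z; rewrite !inE andbA.
Qed.

Lemma ct_max0 (A : {set T}) m t : (forall x, x \in A -> a x <= a m) -> a m < t ->
  ct A t = 0%N.
Proof.
move=> H mt; apply/eqP; rewrite cards_eq0; apply/eqP/setP=> z; rewrite !inE.
case: (boolP (z \in A)) => //= zA.
by apply/negbTE; rewrite -ltNge (le_lt_trans (H _ zA) mt).
Qed.

Lemma LC (A : {set T}) (b : seq R) : all (fun y => 0 <= y) b ->
  (forall t, (ct A t <= cnt t b)%N) -> \sum_(x in A) a x <= \sum_(y <- b) y.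
Proof.
move H : #|A| => n; elim: n A b H => [|n IH] A b cA bpos hyp.
  move: cA => /eqP; rewrite cards_eq0 => /eqP->; rewrite big_set0.
  by rewrite big_seq; apply: sumr_ge0 => i ib; exact: (allP bpos i ib).
have An : A != set0 by rewrite -card_gt0 cA.
have [m mA mmax] := set_argmax An.
have c1 : (0 < cnt (a m) b)%N.
  by apply: leq_trans (hyp (a m)); rewrite (ct_D1 _ mA) lexx.
have bn : b != [::] by case: b c1 {hyp bpos}.
have [y0 y0b ymax] := seq_max bn.
have my0 : a m <= y0.
  by move: c1; rewrite /cnt -has_count => /hasP [y yb /= my]; apply: le_trans my (ymax _ yb).
have pe := perm_to_rem y0b; set b' := rem y0 b in pe.
have cA' : #|A :\ m| = n by move: cA; rewrite (cardsD1 m) mA add1n => [[]].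
rewrite (big_setD1 m mA) /= (perm_big _ pe) big_cons /=.
apply: lerD; first exact: my0.
apply: IH cA' _ _.
  by apply/allP => y /mem_rem yb; exact: (allP bpos y yb).
move=> t; case: (lerP t (a m)) => tm.
  have := hyp t; rewrite (ct_D1 _ mA) tm /cnt (permP pe) /= (le_trans tm my0).
  by rewrite !add1n ltnS.
rewrite (@ct_max0 (A :\ m) m) // => x; rewrite inE => /andP[_ /mmax] //.
Qed.

Lemma LCd d (A : {set T}) (b : seq R) : all (fun y => 0 <= y) b ->
  (forall t, (ct A t <= d + cnt t b)%N) ->
  exists X : {set T}, [/\ X \subset A, (#|X| <= d)%N,
    (forall x y, x \in X -> y \in A :\: X -> a y <= a x) &
    \sum_(x in A :\: X) a x <= \sum_(y <- b) y].
Proof.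
move=> bpos; elim: d A => [|d IH] A hyp.
  exists set0; split; [exact: sub0set | by rewrite cards0 | by move=> x y; rewrite inE | ].
  by rewrite setD0; apply: LC => // t; rewrite -[cnt _ _]add0n.
case: (eqVneq A set0) => [->|An].
  exists set0; split; [exact: sub0set | by rewrite cards0 | by move=> x y; rewrite inE | ].
  by rewrite setD0 big_set0 big_seq; apply: sumr_ge0 => i ib; exact: (allP bpos i ib).
have [m mA mmax] := set_argmax An.
have [X' [sX cX top sm]] : exists X : {set T}, [/\ X \subset A :\ m, (#|X| <= d)%N,
    (forall x y, x \in X -> y \in (A :\ m) :\: X -> a y <= a x) &
    \sum_(x in (A :\ m) :\: X) a x <= \sum_(y <- b) y].
  apply: IH => t; case: (lerP t (a m)) => tm.
    by have := hyp t; rewrite (ct_D1 _ mA) tm add1n addSn ltnS.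
  by rewrite (@ct_max0 (A :\ m) m) // => x; rewrite inE => /andP[_ /mmax].
have E : A :\: (m |: X') = (A :\ m) :\: X'.
  by apply/setP=> z; rewrite !inE negb_or; case: (z != m); case: (z \in X'). 
exists (m |: X'); split.
- by rewrite subUset sub1set mA (subset_trans sX) // subsetDl.
- by rewrite (leq_trans (leq_card_setU _ _)) // cards1 add1n ltnS.
- move=> x y; rewrite E in_setU1 => /orP[/eqP->|xX] yin.
    by apply: mmax; move: yin; rewrite !inE => /andP[_ /andP[_ ->]].
  exact: top.
- by rewrite E.
Qed.

End LC.

Section Seqs.
Variable V : finType.

Lemma zip_path (e : rel V) x s : path e x s ->
  forall xy, xy \in zip (x :: s) s -> e xy.1 xy.2.
Proof.
elim: s x => [|y s IH] x //= /andP[exy pth] xy; rewrite inE => /orP[/eqP->//|].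
exact: IH.
Qed.

Lemma zip_conn (K : {set {set V}}) x s : path (adj K) x s ->
  forall v, v \in x :: s -> connect (adj K) x v.
Proof.
elim: s x => [|y s IH] x /=; first by move=> _ v; rewrite inE => /eqP->; rewrite connect0.
case/andP=> axy pth v; rewrite inE => /orP[/eqP->|vin]; first by rewrite connect0.
exact: conn_trans (adj_conn axy) (IH _ pth _ vin).
Qed.


Lemma path_adj_sub (E K : {set {set V}}) x s : path (adj E) x s ->
  (forall xy, xy \in zip (x :: s) s -> [set xy.1; xy.2] \in K) -> path (adj K) x s.
Proof.
elim: s x => [|y s IH] x //= /andP[/andP[nxy _] pth] H; apply/andP; split.
  by rewrite /adj /= nxy (H (x, y)) // inE eqxx.
by apply: IH => // xy xyin; apply: H; rewrite inE xyin orbT.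
Qed.

Lemma count_fst (c : V) x s :
  (count (fun xy : V * V => xy.1 == c) (zip (x :: s) s) <= count (pred1 c) (x :: s))%N.
Proof.
elim: s x => [|y s IH] x //=.
by rewrite leq_add2l; apply: (leq_trans (IH y)).
Qed.

Lemma count_snd (c : V) x s :
  (count (fun xy : V * V => xy.2 == c) (zip (x :: s) s) = count (pred1 c) s)%N.
Proof. by elim: s x => [|y s IH] x //=; rewrite IH. Qed.

Lemma count_endpoint (c : V) x s : uniq (x :: s) ->
  (count (fun xy : V * V => (xy.1 == c) || (xy.2 == c)) (zip (x :: s) s) <= 2)%N.
Proof.
move=> u; have := count_predUI (fun xy : V * V => xy.1 == c) (fun xy : V * V => xy.2 == c) (zip (x :: s) s).
move=> E; apply: (leq_trans (leq_addr (count (predI (fun xy : V * V => xy.1 == c) (fun xy : V * V => xy.2 == c)) (zip (x :: s) s)) _)).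
rewrite [X in (X + _ <= _)%N](_ : _ = count (predU (fun xy : V * V => xy.1 == c) (fun xy : V * V => xy.2 == c)) (zip (x :: s) s)) //.
rewrite E -[2%N]/(1 + 1)%N; apply: leq_add.
  apply: (leq_trans (count_fst c x s)); by rewrite count_uniq_mem // leq_b1.
rewrite count_snd count_uniq_mem ?leq_b1 //; by case/andP: u.
Qed.

Lemma sum_fibers (T1 : eqType) (T2 : finType) (g : T1 -> T2) (C : {set T2}) (s : seq T1) :
  all (fun x => g x \in C) s -> size s = (\sum_(c in C) count (fun x => g x == c) s)%N.
Proof.
elim: s => [|x s IH] /=; first by rewrite big1.
case/andP=> gx /IH ->; rewrite big_split /= -add1n; congr (_ + _)%N.
rewrite (bigD1 (g x)) //= eqxx big1 // => c /andP[_ /negbTE]; by rewrite eq_sym => ->.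
Qed.

Lemma card_bigcup_le (X : {set {set V}}) :
  (#|\bigcup_(f in X) f| <= \sum_(f in X) #|f|)%N.
Proof.
move H : #|X| => n; elim: n X H => [|n IH] X cX.
  by move: cX => /eqP; rewrite cards_eq0 => /eqP->; rewrite big_set0 cards0.
have [g gin] : exists g, g \in X by apply/set0Pn; rewrite -card_gt0 cX.
have cX' : #|X :\ g| = n by move: cX; rewrite (cardsD1 g) gin add1n => [[]].
rewrite (big_setD1 g gin) /= (big_setD1 g gin) /=.
by apply: (leq_trans (leq_card_setU _ _)); rewrite leq_add2l IH.
Qed.

End Seqs.

Definition edge (V : finType) (xy : V * V) : {set V} := [set xy.1; xy.2].

Section Count.
Local Open Scope ring_scope.
Variables (R : realFieldType) (V : finType) (E : {set {set V}}) (w : {set V} -> R)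
  (S F : {set {set V}}).
Hypothesis gS : is_graph S.
Hypothesis sSE : S \subset E.
Hypothesis msf : min_spanning_forest w S F.

Lemma CL h0 s (t : R) : path (adj E) h0 s -> (forall v, v \in h0 :: s) ->
  (#|[set f in F | (t <= w f)%R]| <=
   count (fun xy => (t <= w (edge xy))%R) (zip (h0 :: s) s) +
   count (fun xy => (edge xy \notin S) && (w (edge xy) < t)%R) (zip (h0 :: s) s))%N.
Proof.
move=> pth cov; set P := zip _ _.
have sFS : F \subset S by case: msf => [[]].
have fF : forest F by case: msf => [[]].
have cF : forall x y, connect (adj F) x y = connect (adj S) x y by case: msf => [[_ _ h] _].
have gF : is_graph F by move=> f /(subsetP sFS) /gS.
pose Lp := fun xy : V * V => (edge xy \in S) && (w (edge xy) < t).
pose B := [set edge xy | xy in [seq xy <- P | Lp xy]].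
pose O := [set edge xy | xy in [seq xy <- P | ~~ Lp xy]].
set Flt := [set f in F | w f < t]; set Fge := [set f in F | t <= w f].
have adjP : forall xy, xy \in P -> adj E xy.1 xy.2 := zip_path pth.
have pairs : forall (Q : pred (V * V)) g, g \in [set edge xy | xy in [seq xy <- P | Q xy]] ->
    exists p q, g = [set p; q].
  by move=> Q g /imsetP[xy _ ->]; exists xy.1, xy.2.
have cardF : (#|Flt| + #|Fge| = #|F|)%N.
  rewrite -(cardsID Flt F); congr (_ + _)%N; apply: eq_card => z; rewrite !inE.
    by case: (z \in F).
  by case: (z \in F); rewrite /= ?andbF // leNgt andbT.
have h1 := comps_forest gF fF.
have h2 : (#|V| <= #|Flt| + comps Flt)%N.
  apply: comps_lb => g; rewrite inE => /andP[/(subsetP sFS) gin _].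
  by have [p [q [_ ->]]] := pair_of gS gin; exists p, q.
have h3 : (comps Flt <= comps B)%N.
  apply: comps_mono => x y; apply: conn_edges => u v /andP[nuv] /imsetP[xy].
  rewrite mem_filter => /andP[/andP[eS wt] xyP] Ee.
  have nxy : xy.1 != xy.2 by case/andP: (adjP _ xyP).
  have c := cut_light gS msf nxy eS wt.
  by case/set2_eq: Ee => [[-> ->]|[-> ->]] //; rewrite conn_sym.
have h4 : (comps B <= comps (B :|: O) + #|O|)%N := comps_union B (@pairs _).
have h5 : (comps (B :|: O) <= comps F)%N.
  apply: comps_mono => x y _.
  have pB : path (adj (B :|: O)) h0 s.
    apply: (path_adj_sub pth) => xy xyP; rewrite inE; case: (boolP (Lp xy)) => h.
      by apply/orP; left; apply: imset_f; rewrite mem_filter h.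
    by apply/orP; right; apply: imset_f; rewrite mem_filter h.
  apply: (@conn_trans _ _ _ h0); first by rewrite conn_sym (zip_conn pB).
  exact: zip_conn pB _ (cov y).
have h6 : (#|O| <= count (predC Lp) P)%N.
  by rewrite (leq_trans (leq_imset_card _ _)) // (leq_trans (card_size _)) // size_filter.
have h7 : (count (predC Lp) P <= count (fun xy => (t <= w (edge xy))%R) P +
    count (fun xy => (edge xy \notin S) && (w (edge xy) < t)%R) P)%N.
  rewrite -count_predUI (leq_trans _ (leq_addr _ _)) //; apply: sub_count => xy /=.
  rewrite /Lp negb_and -leNgt; case: lerP => //= _; by rewrite orbF.
apply: leq_trans h7; apply: leq_trans h6.
rewrite -(leq_add2l (#|Flt| + comps F)) addnAC cardF.
apply: leq_trans h1 _; apply: leq_trans h2 _.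
rewrite -addnA leq_add2l (leq_trans h3) // (leq_trans h4) //.
by rewrite leq_add2r.
Qed.

End Count.

Unset Implicit Arguments.
Local Open Scope ring_scope.

Theorem mainTheorem2 (R : realFieldType) (V : finType)
  (E : {set {set V}}) (w : {set V} -> R) (r : V -> R)
  (F : {set {set V}}) (H : seq V) :
  is_graph E ->
  distinct_pos_weights E w ->
  (exists p, ham_path E p) ->
  (forall v, 0 < r v) ->
  min_spanning_forest w (SDG E w r) F ->
  min_ham_path E w H ->
  exists Et : {set {set V}},
    [/\ Et \subset F, wset w Et <= path_weight w H &
        (#|V| <= 5 * #|isolated (F :\: Et)|)%N].
Proof.
move=> gE dw _ rpos msf [[uH covH pthH] _].
set S := SDG E w r.
have sSE : S \subset E by apply/subsetP=> f; rewrite inE => /andP[].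
have gS : is_graph S by move=> f /(subsetP sSE) /gE.
have sFS : F \subset S by case: msf => [[]].
have gF : is_graph F by move=> f /(subsetP sFS) /gS.
case: H uH covH pthH => [|h0 s] uH covH pthH.
  exists set0; split; first exact: sub0set.
    by rewrite /wset big_set0 /path_weight /= big_nil.
  have -> : #|V| = 0%N by apply: eq_card0 => v; have := covH v.
  by [].
set P := zip (h0 :: s) s.
have adjP : forall xy, xy \in P -> adj E xy.1 xy.2 := zip_path pthH.
pose b := [seq w (edge xy) | xy <- P].
have pw : path_weight w (h0 :: s) = \sum_(y <- b) y by rewrite /path_weight big_map.
have bpos : all (fun y => 0 <= y) b.
  apply/allP=> y /mapP[xy xyP ->]; case/andP: (adjP _ xyP) => _ eE.
  by apply: ltW; apply: dw.1.
have cntE : forall t, cnt t b = count (fun xy => (t <= w (edge xy))) P.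
  by move=> t; rewrite /cnt count_map.
pose D := (\max_(f in F) (ct w F (w f) - cnt (w f) b))%N.
have hD : forall t, (ct w F t <= D + cnt t b)%N.
  move=> t; case: (eqVneq [set f in F | t <= w f] set0) => [E0|Fn].
    by rewrite /ct E0 cards0.
  have [f1 f1in f1min] := set_argmax (fun f => - w f) Fn.
  move: f1in; rewrite inE => /andP[f1F tf1].
  have E1 : ct w F t = ct w F (w f1).
    rewrite /ct; apply: eq_card => z; rewrite !inE; case: (boolP (z \in F)) => //= zF.
    apply/idP/idP => h; last exact: le_trans tf1 h.
    by have := f1min z; rewrite inE zF h lerN2 => /(_ isT).
  have E2 : (cnt (w f1) b <= cnt t b)%N.
    by apply: sub_count => y /= h; apply: le_trans tf1 h.
  rewrite E1 (leq_trans _ (leq_add (leqnn D) E2)) // addnC -leq_subLR.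
  by rewrite /D; apply: (@leq_bigmax_cond _ (fun f => f \in F) (fun f => (ct w F (w f) - cnt (w f) b)%N) f1 f1F).
have [X [sXF cX top sm]] := LCd bpos hD.
exists (F :\: X); split.
- exact: subsetDl.
- by rewrite /wset pw.
have -> : F :\: (F :\: X) = X.
  apply/setP=> z; rewrite !inE; case: (boolP (z \in X)) => zX /=.
    by rewrite (subsetP sXF _ zX).
  by case: (z \in F).
set Iso := isolated X.
have compl : (#|~: Iso| <= 2 * #|X|)%N.
  have sub : ~: Iso \subset \bigcup_(f in X) f.
    apply/subsetP=> v; rewrite !inE => /forallPn [f]; rewrite negb_imply negbK => /andP[fX vf].
    by apply/bigcupP; exists f.
  apply: leq_trans (subset_leq_card sub) _; apply: leq_trans (card_bigcup_le X) _.
  rewrite mulnC -sum_nat_const; apply: leq_sum => f fX; by rewrite gF // (subsetP sXF _ fX).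
have ntot := cardsC Iso.
case: (eqVneq #|X| 0%N) => [X0|Xpos].
  move: compl; rewrite X0 muln0 leqn0 => /eqP c0; rewrite -ntot c0 addn0.
  by rewrite leq_pmull.
have Fpos : (0 < #|F|)%N.
  by apply: leq_trans (subset_leq_card sXF); rewrite lt0n.
have [f0 f0F Df0] := eq_bigmax_cond (fun f => ct w F (w f) - cnt (w f) b)%N Fpos.
rewrite -/D in Df0.
set t0 := w f0 in Df0.
have DN : (D <= count (fun xy => (edge xy \notin S) && (w (edge xy) < t0)%R) P)%N.
  by rewrite Df0 leq_subLR cntE; exact: (CL gS msf t0 pthH covH).
have DF : (D <= ct w F t0)%N by rewrite Df0 leq_subr.
have Xge : forall x, x \in X -> t0 <= w x.
  move=> x xX; rewrite leNgt; apply/negP => xlt.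
  have sub : [set f in F | t0 <= w f] \proper X.
    apply/properP; split.
      apply/subsetP=> y; rewrite inE => /andP[yF ty]; apply/negPn/negP => yX.
      have yx : w y <= w x by apply: top; rewrite // inE yX yF.
      by move: (lt_le_trans (le_lt_trans yx xlt) ty); rewrite ltxx.
    by exists x; rewrite // inE negb_and -ltNge xlt orbT.
  have := proper_card sub; rewrite -/(ct w F t0) => h.
  by move: (leq_trans h (leq_trans cX DF)); rewrite ltnn.
pose Nset := [seq xy <- P | (edge xy \notin S) && (w (edge xy) < t0)].
pose pick (xy : V * V) := if r xy.1 < w (edge xy) then xy.1 else xy.2.
have pickP : forall xy, xy \in Nset -> r (pick xy) < w (edge xy).
  move=> xy; rewrite mem_filter => /andP[/andP[nS _] xyP].
  case/andP: (adjP _ xyP) => _ eE.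
  move: nS; rewrite /S /SDG inE eE /= => /forallPn [u]; rewrite negb_imply -ltNge => /andP[uin ru].
  rewrite /pick; case: ifP => // h; move: uin; rewrite !inE => /orP[]/eqP ue; subst u => //.
  by rewrite ru in h.
pose C0 := [set pick xy | xy in Nset].
have C0iso : C0 \subset Iso.
  apply/subsetP=> c /imsetP[xy xyN ->]; rewrite inE; apply/forall_inP => f fX; apply/negP => cf.
  have fS : f \in S := subsetP sFS _ (subsetP sXF _ fX).
  move: fS; rewrite inE => /andP[_ /forall_inP /(_ _ cf)] wr.
  have rp := pickP _ xyN.
  move: xyN; rewrite mem_filter => /andP[/andP[_ wt] _].
  have := Xge _ fX => tf.
  by move: (le_lt_trans wr (lt_trans rp (lt_le_trans wt tf))); rewrite ltxx.
have NC : (size Nset <= 2 * #|C0|)%N.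
  rewrite (sum_fibers (g := pick) (C := C0)); last by apply/allP => xy xyN; apply: imset_f.
  rewrite mulnC -sum_nat_const; apply: leq_sum => c _.
  rewrite count_filter; apply: leq_trans (count_endpoint c uH).
  apply: sub_count => xy /= /andP[/eqP <- _]; rewrite /pick; case: ifP => _; by rewrite eqxx ?orbT.
have sN : size Nset = count (fun xy => (edge xy \notin S) && (w (edge xy) < t0)) P.
  by rewrite size_filter.
have cI := subset_leq_card C0iso.
rewrite -ntot.
have h : (#|~: Iso| <= 4 * #|Iso|)%N.
  apply: (leq_trans compl); rewrite -[4%N]/(2 * 2)%N -mulnA leq_mul2l /=.
  apply: leq_trans cX _; apply: leq_trans DN _; rewrite -sN (leq_trans NC) //.
  by rewrite leq_mul2l.
by rewrite -[5%N]/(1 + 4)%N mulnDl mul1n leq_add2l.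
Qed.
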